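(* Let $J:[0,\infty)\to\mathbb R$ be a concave, nondecreasing function with $J(0)=0$, and let $k:(0,\infty)\to(0,\infty)$ be nondecreasing and satisfy $k(Cz)\le C\,k(z)$ for all $C\ge1$ and $z>0$. If $z>0$ satisfies $z^2\le A^2+B^2J\bigl(k(z)\bigr)$ for some $A,B>0$, then $$J(z)\le K\,J(A)\Bigl[1+J\bigl(k(A)\bigr)\Bigl(\frac BA\Bigr)^2\Bigr],$$ where $K$ is a universal constant. *)

(* Defs.v *)
From Stdlib Require Import Reals Lra.
Open Scope R_scope.

Definition concave_on_nonneg (J : R -> R) : Prop :=
  forall x y t, 0 <= x -> 0 <= y -> 0 <= t <= 1 ->
    t * J x + (1 - t) * J y <= J (t * x + (1 - t) * y).

Definition nondecreasing_on_nonneg (J : R -> R) : Prop :=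
  forall x y, 0 <= x -> x <= y -> J x <= J y.

Definition admissible_k (k : R -> R) : Prop :=
  (forall z, 0 < z -> 0 < k z) /\
  (forall x y, 0 < x -> x <= y -> k x <= k y) /\
  (forall C z, 1 <= C -> 0 < z -> k (C * z) <= C * k z).

(* Main.v *)
Require Import Defs.
From Stdlib Require Import Reals Lra Psatz.
Open Scope R_scope.

Lemma Jscale (J : R -> R) C x : concave_on_nonneg J -> J 0 = 0 ->
  1 <= C -> 0 <= x -> J (C * x) <= C * J x.
Proof.
  intros Hc H0 HC Hx.
  assert (Ht : 0 <= / C <= 1).
  { split. left; apply Rinv_0_lt_compat; lra.
    rewrite <- Rinv_1; apply Rinv_le_contravar; lra. }
  pose proof (Hc (C * x) 0 (/ C) ltac:(nra) ltac:(lra) Ht) as H.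
  replace (/ C * (C * x) + (1 - / C) * 0) with x in H by (field; lra).
  rewrite H0 in H.
  apply Rmult_le_compat_l with (r := C) in H; [|lra].
  replace (C * (/ C * J (C * x) + (1 - / C) * 0)) with (J (C * x)) in H
    by (field; lra).
  exact H.
Qed.

Theorem lemma3p3 :
  exists K : R, 0 < K /\
  forall (J k : R -> R) (z A B : R),
    concave_on_nonneg J -> nondecreasing_on_nonneg J -> J 0 = 0 ->
    admissible_k k ->
    0 < z -> 0 < A -> 0 < B ->
    z ^ 2 <= A ^ 2 + B ^ 2 * J (k z) ->
    J z <= K * J A * (1 + J (k A) * (B / A) ^ 2).
Proof.
  exists 1. split; [lra|].
  intros J k z A B Hc Hm H0 [Hk1 [Hk2 Hk3]] Hz HA HB Hineq.
  assert (HkA : 0 < k A) by auto.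
  assert (HJkA : 0 <= J (k A)) by (rewrite <- H0; apply Hm; lra).
  assert (HJA : 0 <= J A) by (rewrite <- H0; apply Hm; lra).
  set (D := J (k A) * (B / A) ^ 2).
  assert (HD : 0 <= D) by (unfold D; apply Rmult_le_pos; [lra| apply pow2_ge_0]).
  destruct (Rle_lt_dec z A) as [Hle|Hlt].
  - assert (J z <= J A) by (apply Hm; lra). nra.
  - set (C := z / A).
    assert (HC : 1 <= C) by (unfold C; apply Rmult_le_reg_r with A; [lra|]; replace (z / A * A) with z by (field; lra); lra).
    assert (HzC : z = C * A) by (unfold C; field; lra).
    assert (Hkz : k z <= C * k A) by (rewrite HzC; apply Hk3; lra).
    assert (HJkz : J (k z) <= C * J (k A)).
    { apply Rle_trans with (J (C * k A)).
      apply Hm; [left; apply Hk1; lra | exact Hkz].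
      apply Jscale; auto; lra. }
    assert (Hq : C ^ 2 <= 1 + D * C).
    { unfold D.
      assert (E: (B / A) ^ 2 = B ^ 2 / A ^ 2) by (field; lra).
      rewrite E.
      assert (HA2 : 0 < A ^ 2) by nra.
      apply Rmult_le_reg_r with (A ^ 2); [lra|].
      replace (C ^ 2 * A ^ 2) with (z ^ 2) by (rewrite HzC; ring).
      replace ((1 + J (k A) * (B ^ 2 / A ^ 2) * C) * A ^ 2)
        with (A ^ 2 + B ^ 2 * (C * J (k A))) by (field; lra).
      nra. }
    assert (HC1 : C <= 1 + D) by nra.
    rewrite HzC.
    apply Rle_trans with (C * J A). apply Jscale; auto; lra.
    fold D. nra.
Qed.
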